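(* Let $N\ge 2$, $M\ge 2$, $d\ge 2$ be integers and let $\{p(\boldsymbol{a}|\boldsymbol{x})\}$ be any $(N+1)$-partite nonsignalling probability distribution in which each party $A^{(k)}$, $k=1,\dots,N+1$, chooses one of $M$ measurements $A^{(k)}_{x_k}$, $x_k\in\{1,\dots,M\}$, each with $d$ outcomes in $\mathbb{Z}_d=\{0,\dots,d-1\}$. Then $$I^{N,M,d}_{A^{(1)}\cdots A^{(N)}}+\big\langle[A^{(k)}_{x_k}-A^{(N+1)}_{x_{N+1}}]\big\rangle+\big\langle[A^{(N+1)}_{x_{N+1}}-A^{(k)}_{x_k}]\big\rangle\ \ge\ d-1$$ for all $x_k,x_{N+1}\in\{1,\dots,M\}$ and all $k\in\{1,\dots,N\}$, where $I^{N,M,d}_{A^{(1)}\cdots A^{(N)}}$ is the Bell expression (evaluated on the marginal of the first $N$ parties) defined in the context.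
   Context: Notation: $[\Omega]$ denotes $\Omega$ modulo $d$, and $\langle[\Omega]\rangle=\sum_{i=0}^{d-1} i\,P([\Omega]=i)$, computed from the (well-defined by no-signalling) marginal joint distribution of the measurements appearing in $\Omega$. For a party $X$ with observables $X_1,\dots,X_M$, indices beyond $M$ are interpreted by $X_{iM+\gamma}:=[X_\gamma+i]$ (the outcome shifted by $i$ mod $d$), $\gamma\in\{1,\dots,M\}$. The Bell expression is defined recursively. For $N=2$: $I^{2,M,d}_{A^{(1)}A^{(2)}}=\sum_{\alpha=1}^{M}\big(\langle[A^{(1)}_\alpha-A^{(2)}_\alpha]\rangle+\langle[A^{(2)}_\alpha-A^{(1)}_{\alpha+1}]\rangle\big)$. For $N\ge3$: $I^{N,M,d}_{A^{(1)}\cdots A^{(N)}}=\frac1M\sum_{\alpha_{N-1}=1}^{M} I^{N-1,M,d}_{A^{(1)}\cdots A^{(N-1)}}(\alpha_{N-1})\circ A^{(N)}_{\alpha_{N-1}}$, where $I^{N-1,M,d}(\alpha_{N-1})$ is $I^{N-1,M,d}$ with the observable index $\alpha_{N-2}$ of the last party $A^{(N-1)}$ relabelled as $\alpha_{N-2}\to\alpha_{N-2}+\alpha_{N-1}-1$, and ''$\circ A^{(N)}_{\gamma}$'' means inserting $A^{(N)}_{\gamma}$ inside each bracket $\langle[\cdot]\rangle$ with the sign opposite to that of $A^{(N-1)}$ in that bracket. Explicitly, this gives $I^{N,M,d}=\frac{1}{M^{N-2}}\sum_{\alpha_1,\dots,\alpha_{N-1}=1}^{M}\Big(\big\langle[A^{(1)}_{\alpha_1}+S]\big\rangle+\big\langle[-A^{(1)}_{\alpha_1+1}-S]\big\rangle\Big)$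 with $S=\sum_{k=2}^{N-1}(-1)^{k-1}A^{(k)}_{\alpha_{k-1}+\alpha_k-1}+(-1)^{N-1}A^{(N)}_{\alpha_{N-1}}$ (for $N=2$, $S=-A^{(2)}_{\alpha_1}$). Its local (classical) bound is $I^{N,M,d}\ge d-1$ and its minimal nonsignalling value is $0$. Nonsignalling: marginals of any subset of parties are independent of the remaining parties' measurement choices. *)

(* Defs.v *)
From HB Require Import structures.
From mathcomp Require Import all_boot all_order all_algebra.
Set Implicit Arguments. Unset Strict Implicit. Unset Printing Implicit Defensive.
Import Order.TTheory GRing.Theory Num.Theory.
Local Open Scope ring_scope.

(* Conventions: n parties indexed by 'I_n; settings 0-based in 'I_M
   (paper's setting alpha in {1..M} is our alpha-1); outcomes in 'I_d.
   A behaviour is p x a = p(a|x). *)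

Definition is_behavior (R : numDomainType) (n M d : nat)
  (p : {ffun 'I_n -> 'I_M} -> {ffun 'I_n -> 'I_d} -> R) : Prop :=
  (forall x a, 0 <= p x a) /\ (forall x, \sum_(a : {ffun 'I_n -> 'I_d}) p x a = 1).

Definition marginal (R : numDomainType) (n M d : nat)
  (p : {ffun 'I_n -> 'I_M} -> {ffun 'I_n -> 'I_d} -> R)
  (S : {set 'I_n}) (x : {ffun 'I_n -> 'I_M}) (aS : {ffun 'I_n -> 'I_d}) : R :=
  \sum_(a : {ffun 'I_n -> 'I_d} | [forall i in S, a i == aS i]) p x a.

Definition nonsignalling (R : numDomainType) (n M d : nat)
  (p : {ffun 'I_n -> 'I_M} -> {ffun 'I_n -> 'I_d} -> R) : Prop :=
  forall (S : {set 'I_n}) (x x' : {ffun 'I_n -> 'I_M}) (aS : {ffun 'I_n -> 'I_d}),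
    (forall i, i \in S -> x i = x' i) -> marginal p S x aS = marginal p S x' aS.

(* A bracket Omega is a list of signed measurements (party, index j, sign),
   where the 0-based index j may exceed M-1: observable number j (0-based)
   is setting (j mod M) with outcome shifted by (j div M), i.e. the paper's
   X_{iM+gamma} := [X_gamma + i]. *)
Definition setd (M : nat) (u0 : 'I_M) (j : nat) : 'I_M := insubd u0 (j %% M)%N.

(* full setting vector: parties in Omega use their settings, other parties
   use the settings of x (irrelevant by nonsignalling) *)
Definition tsetting (n M : nat) (x : {ffun 'I_n -> 'I_M}) (t : seq ('I_n * nat * int))
  : {ffun 'I_n -> 'I_M} :=
  [ffun i => foldr (fun e u => if e.1.1 == i then setd u e.1.2 else u) (x i) t].

Definition tval (n M d : nat) (a : {ffun 'I_n -> 'I_d}) (t : seq ('I_n * nat * int)) : int :=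
  \sum_(e <- t) e.2 * ((nat_of_ord (a e.1.1) + e.1.2 %/ M)%N)%:Z.

Definition bexp (R : numDomainType) (n M d : nat)
  (p : {ffun 'I_n -> 'I_M} -> {ffun 'I_n -> 'I_d} -> R)
  (x : {ffun 'I_n -> 'I_M}) (t : seq ('I_n * nat * int)) : R :=
  \sum_(a : {ffun 'I_n -> 'I_d})
     p (tsetting x t) a * ((intdiv.modz (tval M a t) (d%:Z)))%:~R.

(* alpha_{j+1} (0-based value) from a tuple of N-1 settings *)
Definition av (N M : nat) (al : (N.-1).-tuple 'I_M) (j : nat) : nat :=
  nth 0%N [seq nat_of_ord i | i <- al] j.

(* S = sum_{k=2}^{N-1} (-1)^{k-1} A^(k)_{alpha_{k-1}+alpha_k-1}
       + (-1)^{N-1} A^(N)_{alpha_{N-1}}  ; party k is inord (k-1). *)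
Definition Sterm (N M : nat) (al : (N.-1).-tuple 'I_M) : seq ('I_N.+1 * nat * int) :=
  [seq ((inord k.-1 : 'I_N.+1), (av al (k - 2) + av al k.-1)%N, (-1) ^+ k.-1)
     | k <- iota 2 (N - 2)]
  ++ [:: ((inord N.-1 : 'I_N.+1), av al (N - 2), (-1) ^+ N.-1)].

(* [A^(1)_{alpha_1} + S] *)
Definition bra1 (N M : nat) (al : (N.-1).-tuple 'I_M) : seq ('I_N.+1 * nat * int) :=
  ((inord 0 : 'I_N.+1), av al 0, 1) :: Sterm al.

(* [-A^(1)_{alpha_1+1} - S] *)
Definition bra2 (N M : nat) (al : (N.-1).-tuple 'I_M) : seq ('I_N.+1 * nat * int) :=
  ((inord 0 : 'I_N.+1), (av al 0).+1, -1) :: [seq (e.1, - e.2) | e <- Sterm al].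

(* I^{N,M,d}_{A^(1)...A^(N)} evaluated on the first N parties of an
   (N+1)-partite behaviour (party N+1 = ord_max keeps setting x ord_max). *)
Definition bellI (R : numFieldType) (N M d : nat)
  (p : {ffun 'I_N.+1 -> 'I_M} -> {ffun 'I_N.+1 -> 'I_d} -> R)
  (x : {ffun 'I_N.+1 -> 'I_M}) : R :=
  ((M%:R : R) ^+ (N - 2))^-1 *
  \sum_(al : (N.-1).-tuple 'I_M) (bexp p x (bra1 al) + bexp p x (bra2 al)).

(* Main.v *)
Require Import Defs.
From mathcomp Require Import all_boot all_order all_algebra ring lra zify.
Import Order.TTheory GRing.Theory Num.Theory intdiv.
Local Open Scope ring_scope.
Lemma modz_char (D z w : int) : 0 <= w < D -> (D %| z - w)%Z -> (z %% D)%Z = w.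
Proof.
move=> hw hdv; have : (z == w %[mod D])%Z by rewrite eqz_mod_dvd.
by move/eqP => ->; rewrite modz_small.
Qed.

Lemma modz_tri (D u v : int) : 0 < D -> ((u + v) %% D)%Z <= (u %% D)%Z + (v %% D)%Z.
Proof.
move=> hD; have hD0 : D != 0 by rewrite gt_eqF.
rewrite -modzDm; set y := _ + _.
have hy : 0 <= y by rewrite addr_ge0 ?modz_ge0.
rewrite [X in _ <= X](divz_eq y D) lerDr.
by rewrite mulr_ge0 ?divz_ge0 // ltW.
Qed.

Lemma modz_pair (D z : int) : 0 < D ->
  (z %% D)%Z + ((- z) %% D)%Z = if (D %| z)%Z then 0 else D.
Proof.
move=> hD; have hD0 : D != 0 by rewrite gt_eqF.
case: ifP => hdv.
  by move/dvdz_mod0P: (hdv) => ->; rewrite add0r; apply/dvdz_mod0P; rewrite -mulN1r dvdz_mull.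
have h1 : (z %% D)%Z != 0 by apply/negP => /eqP/dvdz_mod0P; rewrite hdv.
have h2 : 0 < (z %% D)%Z by rewrite lt0r h1 modz_ge0.
rewrite (@modz_char D (- z) (D - (z %% D)%Z)); first by rewrite addrC subrK.
  by rewrite subr_ge0 ltW ?ltz_pmod //= ltrBlDr ltrDl.
have -> : - z - (D - (z %% D)%Z) = - ((z %/ D)%Z + 1) * D.
  by rewrite {1}(divz_eq z D); ring.
by rewrite dvdz_mull.
Qed.

Lemma modz_step (D z : int) : 0 < D ->
  ((z - 1) %% D)%Z - (z %% D)%Z = (if (D %| z)%Z then D else 0) - 1.
Proof.
move=> hD; have hD0 : D != 0 by rewrite gt_eqF.
case: ifP => hdv.
  move/dvdz_mod0P: (hdv) => ->; rewrite subr0.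
  apply: modz_char; first by apply/andP; split; lia.
  have -> : z - 1 - (D - 1) = z + (-1) * D by ring.
  by rewrite rpredD // dvdz_mull.
have h1 : (z %% D)%Z != 0 by apply/negP => /eqP/dvdz_mod0P; rewrite hdv.
have h2 : 0 < (z %% D)%Z by rewrite lt0r h1 modz_ge0.
have h3 := ltz_pmod z hD.
rewrite (@modz_char D (z - 1) ((z %% D)%Z - 1)); first by rewrite add0r; ring.
  by apply/andP; split; lia.
have -> : z - 1 - ((z %% D)%Z - 1) = (z %/ D)%Z * D by rewrite {1}(divz_eq z D); ring.
by rewrite dvdz_mull.
Qed.


Section Main.
Variables (R : realFieldType) (N M d : nat)
  (p : {ffun 'I_N.+1 -> 'I_M} -> {ffun 'I_N.+1 -> 'I_d} -> R).
Hypotheses (hN : (2 <= N)%N) (hM : (2 <= M)%N) (hd : (2 <= d)%N)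
  (hb : is_behavior p) (hns : nonsignalling p).

Definition E (y : {ffun 'I_N.+1 -> 'I_M}) (f : {ffun 'I_N.+1 -> 'I_d} -> int) : R :=
  \sum_a p y a * (f a)%:~R.

Lemma d_pos : (0 < d)%N. Proof. exact: leq_trans hd. Qed.

Lemma NSE_key (S : {set 'I_N.+1}) (y : {ffun 'I_N.+1 -> 'I_M}) (f : {ffun 'I_N.+1 -> 'I_d} -> int) :
  (forall a a' : {ffun 'I_N.+1 -> 'I_d}, (forall i, i \in S -> a i = a' i) -> f a = f a') ->
  let a0 : 'I_d := Ordinal d_pos in
  let proj := fun a : {ffun 'I_N.+1 -> 'I_d} => [ffun i => if i \in S then a i else a0] in
  E y f = \sum_b (f b)%:~R * (if proj b == b then marginal p S y b else 0).
Proof.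
move=> hf a0 proj.
have hpf a : f (proj a) = f a by apply: hf => i hi; rewrite ffunE hi.
have hpp a : proj (proj a) = proj a by apply/ffunP => i; rewrite !ffunE; case: (i \in S) => //; rewrite ffunE.
rewrite /E.
transitivity (\sum_a \sum_b (if proj a == b then p y a * (f b)%:~R else 0)).
  apply: eq_bigr => a _; rewrite -big_mkcond /= (big_pred1 (proj a)) ?hpf //.
rewrite exchange_big; apply: eq_bigr => b _.
rewrite -big_mkcond /= -mulr_suml mulrC; congr (_ * _).
case: eqP => hb'.
  rewrite /marginal; apply: eq_bigl => a; apply/eqP/forall_inP.
    by move=> <- i hi; rewrite ffunE hi.
  move=> h; apply/ffunP => i; rewrite ffunE; case: ifP => hi.
    by apply/eqP; apply: h.
  by rewrite -hb' ffunE hi.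
rewrite big_pred0 // => a; apply/negP => /eqP ha; apply: hb'.
by rewrite -ha hpp.
Qed.

Lemma NSE (S : {set 'I_N.+1}) (y y' : {ffun 'I_N.+1 -> 'I_M}) (f : {ffun 'I_N.+1 -> 'I_d} -> int) :
  (forall i, i \in S -> y i = y' i) ->
  (forall a a' : {ffun 'I_N.+1 -> 'I_d}, (forall i, i \in S -> a i = a' i) -> f a = f a') ->
  E y f = E y' f.
Proof.
move=> hy hf; rewrite (NSE_key S y f hf) (NSE_key S y' f hf).
apply: eq_bigr => b _; case: ifP => // _; congr (_ * _).
exact: hns.
Qed.


Lemma modz_def (y D : int) : (y %% D)%Z = y - (y %/ D)%Z * D.
Proof. by apply/eqP; rewrite eq_sym subr_eq addrC -divz_eq. Qed.

Lemma E_ge0 y f : (forall a, 0 <= f a) -> 0 <= E y f.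
Proof.
move=> h; apply: sumr_ge0 => a _; apply: mulr_ge0; first by case: hb.
by rewrite ler0z.
Qed.

Lemma E_add y f g : E y (fun a => f a + g a) = E y f + E y g.
Proof. by rewrite /E -big_split; apply: eq_bigr => a _; rewrite rmorphD mulrDr. Qed.

Lemma E_sub y f g : E y (fun a => f a - g a) = E y f - E y g.
Proof. by rewrite /E -sumrB; apply: eq_bigr => a _; rewrite rmorphB mulrBr. Qed.

Lemma E_le y f g : (forall a, f a <= g a) -> E y f <= E y g.
Proof.
move=> h; rewrite -subr_ge0 -E_sub; apply: E_ge0 => a; by rewrite subr_ge0.
Qed.

Lemma E_ext y f g : (forall a, f a = g a) -> E y f = E y g.
Proof. by move=> h; apply: eq_bigr => a _; rewrite h. Qed.

Variable x : {ffun 'I_N.+1 -> 'I_M}.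

Lemma M_pos : (0 < M)%N. Proof. exact: leq_trans hM. Qed.
Definition m0 : 'I_M := Ordinal M_pos.
Definition setI (J : int) : 'I_M := insubd m0 `|(J %% M%:Z)%Z|%N.

Lemma setI_val J : val (setI J) = `|(J %% M%:Z)%Z|%N.
Proof.
rewrite val_insubd; case: ifP => // /negP []; rewrite -ltz_nat abszE.
have hM0 : (0 < M%:Z) by rewrite ltz_nat M_pos.
by rewrite ger0_norm ?ltz_pmod ?modz_ge0 // gt_eqF.
Qed.

Definition EBset (g : nat -> int) : {ffun 'I_N.+1 -> 'I_M} :=
  [ffun i : 'I_N.+1 => if (i < N)%N then setI (g i) else x i].
Definition EBval (g : nat -> int) (a : {ffun 'I_N.+1 -> 'I_d}) : int :=
  \sum_(m < N) (-1)^+m * ((a (inord m) : nat)%:Z + (g m %/ M%:Z)%Z).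
Definition gb (bv : nat -> int) (m : nat) : int := bv m + bv m.+1.
Definition md (z : int) : int := (z %% d%:Z)%Z.
Definition EB (s : int) (bv : nat -> int) : R :=
  E (EBset (gb bv)) (fun a => md (s * EBval (gb bv) a)).
Definition xk (k : nat) (J : int) : {ffun 'I_N.+1 -> 'I_M} :=
  [ffun i : 'I_N.+1 => if i == inord k then setI J else x i].
Definition Psi (k : nat) (cf : int -> int) (J : int) : R :=
  E (xk k J) (fun a => md ((-1)^+k * ((a (inord k) : nat)%:Z + (J %/ M%:Z)%Z)
                          - cf (a ord_max : nat)%:Z)).

Lemma d_posz : 0 < d%:Z. Proof. by rewrite ltz_nat d_pos. Qed.

Lemma pair_bound (k : nat) (hk : (k < N)%N) (bv bv' : nat -> int) :
  (forall m, (m < N)%N -> m != k -> gb bv' m = gb bv m) ->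
  forall cf, Psi k cf (gb bv k) - Psi k cf (gb bv' k) <= EB 1 bv + EB (-1) bv'.
Proof.
move=> hg cf.
set ko : 'I_N := Ordinal hk.
pose term (g : nat -> int) (a : {ffun 'I_N.+1 -> 'I_d}) (m : 'I_N) : int :=
  (-1)^+m * ((a (inord m) : nat)%:Z + (g m %/ M%:Z)%Z).
pose rst (g : nat -> int) (a : {ffun 'I_N.+1 -> 'I_d}) := \sum_(m < N | m != ko) term g a m.
have hsplit g a : EBval g a = term g a ko + rst g a by rewrite /EBval (bigD1 ko).
have hrst a : rst (gb bv') a = rst (gb bv) a.
  apply: eq_bigr => m hm; rewrite /term hg //.
have hrstd (a a' : {ffun 'I_N.+1 -> 'I_d}) : (forall i, i \in [set i | i != inord k :> 'I_N.+1] -> a i = a' i) ->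
    rst (gb bv) a = rst (gb bv) a'.
  move=> h; apply: eq_bigr => m hm; rewrite /term h // inE.
  apply/negP => /eqP /(congr1 (@nat_of_ord _)); rewrite !inordK ?ltnS ?(ltnW hk) ?(ltnW (ltn_ord m)) //.
  by move=> hmk; move: hm; rewrite -(inj_eq val_inj) /= hmk eqxx.
pose c (a : {ffun 'I_N.+1 -> 'I_d}) := cf (a ord_max : nat)%:Z.
have hko : inord k != ord_max :> 'I_N.+1.
  apply/negP => /eqP /(congr1 (@nat_of_ord _)); rewrite inordK ?ltnS ?(ltnW hk) //= => hkN.
  by move: (hk); rewrite hkN ltnn.
have hP g : Psi k cf (g k) = E (EBset g) (fun a => md (term g a ko - c a)).
  apply: (NSE [set inord k; ord_max]).
    move=> i; rewrite !inE => /orP [] /eqP ->; rewrite !ffunE ?eqxx.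
      by rewrite inordK ?ltnS ?(ltnW hk) // hk.
    by rewrite eq_sym (negbTE hko) ltnn.
  by move=> a a' h; rewrite /c !h // !inE eqxx ?orbT.
rewrite (hP (gb bv)) (hP (gb bv')) /EB.
set X1 := EBset (gb bv); set X2 := EBset (gb bv').
have hmid : E X1 (fun a => md (- rst (gb bv) a - c a)) = E X2 (fun a => md (- rst (gb bv) a - c a)).
  apply: (NSE [set i | i != inord k :> 'I_N.+1]).
    move=> i; rewrite inE => hi; rewrite !ffunE; case: ifP => // hiN.
    rewrite hg //; apply/negP => /eqP hik; move: hi; rewrite -(inj_eq val_inj) /= inordK ?hik ?eqxx //.
    by rewrite ltnS ltnW.
  move=> a a' h; rewrite (hrstd a a' h) /c h // inE.
  by rewrite eq_sym.
have h1 : E X1 (fun a => md (term (gb bv) a ko - c a)) - E X1 (fun a => md (- rst (gb bv) a - c a))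
    <= E X1 (fun a => md (1 * EBval (gb bv) a)).
  rewrite -E_sub; apply: E_le => a; rewrite mul1r hsplit lerBlDr.
  have -> : term (gb bv) a ko - c a = (term (gb bv) a ko + rst (gb bv) a) + (- rst (gb bv) a - c a) by ring.
  exact: modz_tri d_posz.
have h2 : E X2 (fun a => md (- rst (gb bv) a - c a)) - E X2 (fun a => md (term (gb bv') a ko - c a))
    <= E X2 (fun a => md (-1 * EBval (gb bv') a)).
  rewrite -E_sub; apply: E_le => a; rewrite mulN1r hsplit hrst lerBlDr.
  have -> : - rst (gb bv) a - c a = (- (term (gb bv') a ko + rst (gb bv) a)) + (term (gb bv') a ko - c a) by ring.
  exact: modz_tri d_posz.
have := lerD h1 h2; rewrite hmid.
move=> h; apply: le_trans h; by rewrite addrA subrK.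
Qed.


Lemma alt_tele (n : nat) (q : nat -> int) :
  \sum_(m < n) (-1)^+m * (q m + q m.+1) = q 0%N - (-1)^+n * q n.
Proof.
elim: n => [|n IH]; first by rewrite big_ord0 expr0 mul1r subrr.
rewrite big_ord_recr /= IH exprS; ring.
Qed.

Lemma M_posz : 0 < M%:Z. Proof. by rewrite ltz_nat M_pos. Qed.
Lemma M_neq0 : M%:Z != 0. Proof. by rewrite gt_eqF // M_posz. Qed.

Lemma EB_wrap (s : int) (bv bv' : nat -> int) :
  bv' 0%N = bv 0%N -> bv' N = bv N -> (forall j, (M%:Z %| bv' j - bv j)%Z) ->
  EB s bv' = EB s bv.
Proof.
move=> h0 hN' hdv.
pose q j := ((bv' j - bv j) %/ M%:Z)%Z.
have hq j : bv' j = bv j + q j * M%:Z by rewrite /q divzK // addrC subrK.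
have hg m : gb bv' m = (q m + q m.+1) * M%:Z + gb bv m.
  by rewrite /gb !hq; ring.
have hset : EBset (gb bv') = EBset (gb bv).
  apply/ffunP => i; rewrite !ffunE; case: ifP => // _.
  by rewrite /setI hg modzMDl.
rewrite /EB hset; apply: E_ext => a; congr (md (s * _)).
rewrite /EBval.
have -> : \sum_(m < N) (-1) ^+ m * ((a (inord m) : nat)%:Z + (gb bv' m %/ M%:Z)%Z)
  = \sum_(m < N) ((-1) ^+ m * ((a (inord m) : nat)%:Z + (gb bv m %/ M%:Z)%Z)
                  + (-1)^+m * (q m + q m.+1)).
  by apply: eq_bigr => m _; rewrite hg divzMDl ?M_neq0 //; ring.
rewrite big_split /= alt_tele.
have -> : q 0%N = 0 by rewrite /q h0 subrr div0z.
have -> : q N = 0 by rewrite /q hN' subrr div0z.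
by rewrite mulr0 subrr addr0.
Qed.


Definition Lst (G : nat -> nat) (S : nat -> int) : seq ('I_N.+1 * nat * int) :=
  [seq ((inord m : 'I_N.+1), G m, S m) | m <- iota 0 N].

Lemma foldr_Lst (G : nat -> nat) (S : nat -> int) (i : 'I_N.+1) a n :
  (a + n <= N)%N ->
  val (foldr (fun e u => if e.1.1 == i then setd u e.1.2 else u) (x i)
        [seq ((inord m : 'I_N.+1), G m, S m) | m <- iota a n])
  = if (a <= i < a + n)%N then (G i %% M)%N else val (x i).
Proof.
elim: n a => [|n IH] a han.
  by rewrite /= addn0; case: ifP => //; case/andP => h1 h2; move: (leq_trans h2 h1); rewrite ltnn.
rewrite /=.
have haN : (a <= N)%N by apply: leq_trans han; rewrite leq_addr.
case: (eqVneq (inord a : 'I_N.+1) i) => [<-|hne].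
  rewrite /setd val_insubd ltn_pmod ?M_pos // inordK ?ltnS // leqnn /=.
  by rewrite -addSnnS leq_addr.
rewrite IH ?addSnnS //.
have hai : a != i.
  by apply: contra hne => /eqP hai; apply/eqP/val_inj; rewrite /= inordK ?ltnS // hai.
by rewrite [(a <= i)%N]leq_eqVlt (negbTE hai).
Qed.

Lemma EBset_ext {g g' : nat -> int} : (forall m, g m = g' m) -> EBset g = EBset g'.
Proof. by move=> h; apply/ffunP => i; rewrite !ffunE h. Qed.

Lemma EBval_ext {g g' : nat -> int} a : (forall m, g m = g' m) -> EBval g a = EBval g' a.
Proof. by move=> h; apply: eq_bigr => m _; rewrite h. Qed.

Lemma tsetting_Lst G S : tsetting x (Lst G S) = EBset (fun m => (G m)%:Z).
Proof.
apply/ffunP => i; apply: val_inj; rewrite !ffunE foldr_Lst ?add0n //=.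
case: ifP => // _; by rewrite setI_val modz_nat absz_nat.
Qed.

Lemma tval_Lst (a : {ffun 'I_N.+1 -> 'I_d}) G S :
  Defs.tval M a (Lst G S) = \sum_(m < N) S m * ((a (inord m) : nat)%:Z + ((G m)%:Z %/ M%:Z)%Z).
Proof.
rewrite /Defs.tval big_map -{1}(subn0 N) -/(index_iota 0 N) big_mkord.
by apply: eq_bigr => m _ /=; rewrite PoszD divz_nat.
Qed.

Lemma bexp_Lst (s : int) (G : nat -> nat) (bv : nat -> int) :
  (forall m, gb bv m = (G m)%:Z) ->
  bexp p x (Lst G (fun m => s * (-1)^+m)) = EB s bv.
Proof.
move=> hG; rewrite /bexp /EB tsetting_Lst -(EBset_ext hG) /E; apply: eq_bigr => a _.
congr (_ * _); congr ((_ %% _)%Z)%:~R.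
rewrite tval_Lst /EBval mulr_sumr; apply: eq_bigr => m _.
by rewrite hG mulrA.
Qed.


Definition bz (z : nat) (al : (N.-1).-tuple 'I_M) (m : nat) : nat :=
  if m is m'.+1 then av al m' else z.
Definition Gz z al m := (bz z al m + bz z al m.+1)%N.
Definition bvz z al (j : nat) : int := (bz z al j)%:Z.

Lemma av_out (al : (N.-1).-tuple 'I_M) j : (N.-1 <= j)%N -> av al j = 0%N.
Proof. by move=> h; rewrite /av nth_default // size_map size_tuple. Qed.

Lemma iota0_split n : (2 <= n)%N -> iota 0 n = 0%N :: iota 1 (n-2) ++ [:: n.-1].
Proof.
case: n => [|[|n]] // _; rewrite !subSS subn0; change (iota 0 n.+2) with (0%N :: iota 1 n.+1).
by rewrite -[n.+1]addn1 iotaD add1n addn1.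
Qed.

Lemma Sterm_E z (al : (N.-1).-tuple 'I_M) :
  Sterm al = [seq ((inord m : 'I_N.+1), Gz z al m, (-1)^+m) | m <- iota 1 (N-2) ++ [:: N.-1]].
Proof.
rewrite /Sterm map_cat; congr (_ ++ _).
  rewrite (iotaDl 1 1) -map_comp; apply/eq_in_map => m; rewrite mem_iota => /andP [h1 _] /=.
  case: m h1 => // m _.
  by rewrite add1n /Gz /= !subSS subn0 add0n.
have hN1 : N.-1 = (N-2).+1 by move: hN; clear; lia.
have hN0 : (0 < N)%N by apply: leq_trans hN.
rewrite /Gz; congr [:: (_, _, _)].
have -> : bz z al N.-1 = av al (N-2) by rewrite hN1.
have -> : bz z al N.-1.+1 = 0%N by rewrite prednK //= -{1}(prednK hN0) /= av_out.
by rewrite addn0.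
Qed.

Lemma bra1E (al : (N.-1).-tuple 'I_M) : bra1 al = Lst (Gz 0 al) (fun m => 1 * (-1)^+m).
Proof.
rewrite /bra1 (Sterm_E 0) /Lst (iota0_split N hN) map_cons; congr (_ :: _).
by apply: eq_map => m; rewrite mul1r.
Qed.

Lemma bra2E (al : (N.-1).-tuple 'I_M) : bra2 al = Lst (Gz 1 al) (fun m => -1 * (-1)^+m).
Proof.
rewrite /bra2 (Sterm_E 1) /Lst (iota0_split N hN) map_cons -map_comp; congr (_ :: _).
by apply: eq_map => m /=; rewrite mulN1r.
Qed.

Lemma gb_bvz z al m : gb (bvz z al) m = (Gz z al m)%:Z.
Proof. by rewrite /gb /bvz /Gz PoszD. Qed.

Lemma bexp_bra1 al : bexp p x (bra1 al) = EB 1 (bvz 0 al).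
Proof. by rewrite bra1E (bexp_Lst 1 _ _ (gb_bvz 0 al)). Qed.

Lemma bexp_bra2 al : bexp p x (bra2 al) = EB (-1) (bvz 1 al).
Proof. by rewrite bra2E (bexp_Lst (-1) _ _ (gb_bvz 1 al)). Qed.


Definition addmod (a r : nat) : 'I_M := Ordinal (ltn_pmod (a + r) M_pos).

Lemma addmod_inj (a b r : nat) : (a < M)%N -> (b < M)%N -> addmod a r = addmod b r -> a = b.
Proof.
move=> ha hb0 /(congr1 (@nat_of_ord _)) /= /eqP.
by rewrite eqn_modDr !modn_small // => /eqP.
Qed.

Lemma av_in (al : (N.-1).-tuple 'I_M) j (hj : (j < N.-1)%N) : av al j = tnth al (Ordinal hj).
Proof. by rewrite /av (nth_map m0) ?size_tuple // (tnth_nth m0). Qed.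

Lemma av_lt (al : (N.-1).-tuple 'I_M) j : (av al j < M)%N.
Proof.
case: (ltnP j N.-1) => hj; first by rewrite (av_in _ _ hj).
by rewrite av_out // M_pos.
Qed.

Section Party.
Variable (k : nat).
Hypothesis hk : (k < N)%N.

Definition phi (al : (N.-1).-tuple 'I_M) : (N.-1).-tuple 'I_M :=
  [tuple (if (i < k)%N then addmod (tnth al i) (if odd i then 1%N else M.-1) else tnth al i)
    | i < N.-1].

Lemma phi_inj : injective phi.
Proof.
move=> al be h; apply: eq_from_tnth => i.
have := congr1 (fun t => tnth t i) h; rewrite /= !tnth_mktuple.
case: ifP => _ //; move/addmod_inj => hh; apply: val_inj; apply: hh; exact: ltn_ord.
Qed.

Lemma av_phi (al : (N.-1).-tuple 'I_M) j : av (phi al) j =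
  if (j < k)%N then ((av al j + (if odd j then 1%N else M.-1)) %% M)%N else av al j.
Proof.
case: (ltnP j N.-1) => hj.
  by rewrite !(av_in _ _ hj) tnth_mktuple /=; case: ifP.
rewrite !av_out //; case: ifP => // hjk.
have : (j < N.-1)%N.
  by apply: leq_trans hjk _; rewrite -ltnS prednK // (leq_trans _ hN).
by rewrite ltnNge hj.
Qed.

Definition tau (r : nat) (al : (N.-1).-tuple 'I_M) : (N.-1).-tuple 'I_M :=
  [tuple (if (i : nat) == k.-1 then addmod (tnth al i) r else tnth al i) | i < N.-1].

Lemma tau_inj r : injective (tau r).
Proof.
move=> al be h; apply: eq_from_tnth => i.
have := congr1 (fun t => tnth t i) h; rewrite /= !tnth_mktuple.
case: ifP => _ //; move/addmod_inj => hh; apply: val_inj; apply: hh; exact: ltn_ord.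
Qed.

Lemma km1_lt : (k.-1 < N.-1)%N.
Proof. move: hk hN; clear; lia. Qed.

Lemma av_tau r (al : (N.-1).-tuple 'I_M) j : av (tau r al) j =
  if j == k.-1 then ((av al j + r) %% M)%N else av al j.
Proof.
case: (ltnP j N.-1) => hj.
  by rewrite !(av_in _ _ hj) tnth_mktuple /=; case: ifP.
rewrite !av_out //; case: ifP => // /eqP hjk.
by move: km1_lt; rewrite -hjk ltnNge hj.
Qed.

Definition Jk (al : (N.-1).-tuple 'I_M) : int := gb (bvz 0 al) k.

Lemma Jk_tau r al : (M%:Z %| Jk (tau r al) - (Jk al + r%:Z))%Z.
Proof.
rewrite /Jk /gb /bvz.
have key : forall (u v : nat), (M%:Z %| (((u + r) %% M)%N)%:Z + v%:Z - (u%:Z + v%:Z + r%:Z))%Z.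
  move=> u v; rewrite -modz_nat modz_def PoszD.
  have -> : (u%:Z + r%:Z) - ((u%:Z + r%:Z) %/ M%:Z)%Z * M%:Z + v%:Z - (u%:Z + v%:Z + r%:Z)
     = - ((u%:Z + r%:Z) %/ M%:Z)%Z * M%:Z by ring.
  by rewrite dvdz_mull.
have [hk0 | hk0] := posnP k.
  rewrite hk0 /= av_tau hk0 /= !add0r.
  by have := key (av al 0) 0%N; rewrite !addr0.
rewrite -(prednK hk0) /= !av_tau eqxx (gtn_eqF (ltnSn _)).
exact: key.
Qed.

Definition sg : int := (-1)^+k.
Definition bpr (al : (N.-1).-tuple 'I_M) (j : nat) : int :=
  bvz 0 al j + (if (j <= k)%N then (-1)^+j else 0).

Lemma hN0 : (0 < N)%N. Proof. exact: leq_trans hN. Qed.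

Lemma EB_phi al : EB (-1) (bvz 1 (phi al)) = EB (-1) (bpr al).
Proof.
apply: EB_wrap.
- by rewrite /bpr /bvz /= expr0 add0r.
- rewrite /bpr /bvz -(prednK hN0) /= av_phi av_out // (prednK hN0).
  rewrite (_ : (N <= k)%N = false) ?addr0; last by rewrite leqNgt hk.
  by [].
- case=> [|i]; first by rewrite /bpr /bvz /= expr0 add0r subrr dvdz0.
  rewrite /bpr /bvz /= av_phi.
  case: ifP => hik; last by rewrite addr0 subrr dvdz0.
  rewrite -modz_nat modz_def -signr_odd /=.
  case: (odd i) => /=.
    have -> : (av al i + 1)%N%:Z - (((av al i + 1)%N)%:Z %/ M%:Z)%Z * M%:Z - ((av al i)%:Z + 1)
       = - (((av al i + 1)%N)%:Z %/ M%:Z)%Z * M%:Z by rewrite PoszD; ring.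
    by rewrite dvdz_mull.
  have hM1 : ((M.-1)%N)%:Z = M%:Z - 1 by rewrite -subn1 subzn // M_pos.
  have -> : (av al i + M.-1)%N%:Z - (((av al i + M.-1)%N)%:Z %/ M%:Z)%Z * M%:Z - ((av al i)%:Z + (-1) ^+ 1)
       = (1 - (((av al i + M.-1)%N)%:Z %/ M%:Z)%Z) * M%:Z by rewrite PoszD hM1 expr1; ring.
  by rewrite dvdz_mull.
Qed.

Lemma gb_bpr al m : gb (bpr al) m = gb (bvz 0 al) m + (if m == k then sg else 0).
Proof.
rewrite /gb /bpr /sg.
case: (ltngtP m k) => hmk.
- by rewrite exprS; ring.
- by rewrite !addr0.
- by rewrite hmk; ring.
Qed.

Lemma Psi_shift (cf0 : int -> int) (q J : int) :
  Psi k (fun c => cf0 c + sg * q) J = Psi k cf0 (J - q * M%:Z).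
Proof.
have eJ : J - q * M%:Z = (- q) * M%:Z + J by ring.
rewrite /Psi.
have -> : xk k J = xk k (J - q * M%:Z).
  apply/ffunP => i; rewrite !ffunE; case: ifP => // _.
  by rewrite /setI eJ modzMDl.
apply: E_ext => a; rewrite eJ divzMDl ?M_neq0 // /sg /md; congr ((_ %% _)%Z); ring.
Qed.

Lemma per_alpha (x0 u : int) al :
  Psi k (fun c : int => sg * c + u) (x0 + ((Jk al - x0) %% M%:Z)%Z)
  - Psi k (fun c : int => sg * c + u) (x0 + ((Jk al - x0) %% M%:Z)%Z + sg)
    <= bexp p x (bra1 al) + bexp p x (bra2 (phi al)).
Proof.
set cf0 := (fun c : int => sg * c + u).
set rho := ((Jk al - x0) %% M%:Z)%Z.
rewrite bexp_bra1 bexp_bra2 EB_phi.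
set q := ((Jk al - x0) %/ M%:Z)%Z.
have e1 : x0 + rho = Jk al - q * M%:Z.
  by rewrite /rho modz_def -/q; ring.
have hg : forall m, (m < N)%N -> m != k -> gb (bpr al) m = gb (bvz 0 al) m.
  by move=> m _ hm; rewrite gb_bpr (negbTE hm) addr0.
have := pair_bound k hk (bvz 0 al) (bpr al) hg (fun c => cf0 c + sg * q).
rewrite gb_bpr eqxx -/(Jk al) !Psi_shift e1.
by have -> : Jk al + sg - q * M%:Z = Jk al - q * M%:Z + sg by ring.
Qed.

Lemma rot_sum (F : nat -> R) c : \sum_(r < M) F ((c + r) %% M)%N = \sum_(r < M) F r.
Proof.
pose G r := F (r %% M)%N.
have hG : forall c, \sum_(r < M) G (c + r)%N = \sum_(r < M) G r.
  elim=> [|c0 IH]; first by apply: eq_bigr => r _; rewrite add0n.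
  rewrite -IH.
  have h1 : \sum_(r < M.+1) G (c0 + r)%N = G (c0 + 0)%N + \sum_(r < M) G (c0 + r.+1)%N.
    by rewrite big_ord_recl.
  have h2 : \sum_(r < M.+1) G (c0 + r)%N = \sum_(r < M) G (c0 + r)%N + G (c0 + M)%N.
    by rewrite big_ord_recr.
  have hGM : G (c0 + M)%N = G (c0 + 0)%N by rewrite /G addn0 modnDr.
  rewrite h2 hGM addrC in h1; move/addrI: h1 => h1.
  rewrite h1; apply: eq_bigr => r _; by rewrite /= addSnnS.
rewrite (hG c); apply: eq_bigr => r _; by rewrite /G modn_small.
Qed.

Lemma avg (T : finType) (rho : T -> nat) (ta : nat -> T -> T) (F : nat -> R) :
  (forall r, injective (ta r)) -> (forall r t, rho (ta r t) = ((rho t + r) %% M)%N) ->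
  M%:R * \sum_t F (rho t) = #|T|%:R * \sum_(r < M) F r.
Proof.
move=> hinj hrho.
have hcM (X : R) : \sum_(r < M) X = M%:R * X by rewrite sumr_const card_ord mulr_natl.
have hcT (X : R) : \sum_(t : T) X = #|T|%:R * X by rewrite sumr_const mulr_natl.
have -> : M%:R * \sum_t F (rho t) = \sum_(r < M) \sum_t F (rho (ta r t)).
  rewrite -hcM; apply: eq_bigr => r _; by rewrite (reindex_inj (hinj r)).
rewrite exchange_big -hcT.
by apply: eq_bigr => t _; rewrite -(rot_sum F (rho t)); apply: eq_bigr => r _; rewrite hrho.
Qed.

Lemma bell_ge (x0 u : int) :
  \sum_(r < M) (Psi k (fun c : int => sg * c + u) (x0 + (r : nat)%:Z)
               - Psi k (fun c : int => sg * c + u) (x0 + (r : nat)%:Z + sg)) <= bellI p x.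
Proof.
set cf0 := (fun c : int => sg * c + u).
pose D (r : nat) := Psi k cf0 (x0 + r%:Z) - Psi k cf0 (x0 + r%:Z + sg).
pose rhon (al : (N.-1).-tuple 'I_M) : nat := `|((Jk al - x0) %% M%:Z)%Z|%N.
have hrz al : (rhon al)%:Z = ((Jk al - x0) %% M%:Z)%Z.
  by rewrite /rhon gez0_abs // modz_ge0 // M_neq0.
have hsum : \sum_(al : (N.-1).-tuple 'I_M) D (rhon al) <= \sum_(al : (N.-1).-tuple 'I_M) (bexp p x (bra1 al) + bexp p x (bra2 al)).
  rewrite [X in _ <= X]big_split /= [X in _ <= _ + X](reindex_inj phi_inj) /= -[X in _ <= X]big_split /=.
  by apply: ler_sum => al _; rewrite /D hrz; exact: per_alpha.
have hrho : forall r al, rhon (tau r al) = ((rhon al + r) %% M)%N.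
  move=> r al; apply/eqP; rewrite -eqz_nat; apply/eqP.
  rewrite hrz -modz_nat PoszD hrz modzDml.
  apply/eqP; rewrite eqz_mod_dvd.
  have -> : Jk (tau r al) - x0 - (Jk al - x0 + r%:Z) = Jk (tau r al) - (Jk al + r%:Z) by ring.
  exact: Jk_tau.
have hav := avg _ rhon tau D tau_inj hrho.
rewrite card_tuple card_ord in hav.
have hM0 : (M%:R : R) != 0 by rewrite pnatr_eq0 -lt0n M_pos.
have hS : \sum_(al : (N.-1).-tuple 'I_M) D (rhon al) = (M%:R ^+ (N-2)) * \sum_(r < M) D r.
  apply: (mulfI hM0); rewrite hav natrX mulrA -exprS.
  by congr (_ ^+ _ * _); move: hN; clear; lia.
have hpos : 0 < (M%:R : R) ^+ (N - 2) by rewrite exprn_gt0 // ltr0n M_pos.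
rewrite /bellI ler_pdivlMl // -hS.
exact: hsum.
Qed.

End Party.


Lemma E_const y (c : int) : E y (fun _ => c) = c%:~R.
Proof.
rewrite /E -mulr_suml; case: hb => _ ->; by rewrite mul1r.
Qed.

Lemma bexp_two (i j : 'I_N.+1) (hij : i != j) (s1 s2 : int) :
  bexp p x [:: (i, nat_of_ord (x i), s1); (j, nat_of_ord (x j), s2)]
  = E x (fun a => md (s1 * (a i : nat)%:Z + s2 * (a j : nat)%:Z)).
Proof.
have hts : tsetting x [:: (i, nat_of_ord (x i), s1); (j, nat_of_ord (x j), s2)] = x.
  apply/ffunP => l; rewrite ffunE /=.
  case: (eqVneq i l) => [<-|_]; first by apply: val_inj; rewrite /setd val_insubd ltn_pmod ?M_pos // modn_small.
  case: (eqVneq j l) => [<-|_] //; by apply: val_inj; rewrite /setd val_insubd ltn_pmod ?M_pos // modn_small.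
rewrite /bexp hts /E; apply: eq_bigr => a _; congr (_ * _ %:~R).
rewrite /Defs.tval !big_cons big_nil addr0 /md.
by rewrite !divn_small ?ltn_ord // !addn0.
Qed.

Lemma Psi_at (k : nat) (hk : (k < N)%N) (cf : int -> int) (t : int) :
  Psi k cf ((x (inord k) : nat)%:Z + t * M%:Z)
  = E x (fun a => md ((-1)^+k * ((a (inord k) : nat)%:Z + t) - cf (a ord_max : nat)%:Z)).
Proof.
rewrite /Psi.
have -> : xk k ((x (inord k) : nat)%:Z + t * M%:Z) = x.
  apply/ffunP => i; rewrite ffunE; case: eqP => [->|] //.
  apply: val_inj; rewrite setI_val addrC modzMDl modz_nat modn_small ?absz_nat //.
apply: E_ext => a; congr (md (_ * (_ + _) - _)).
by rewrite addrC divzMDl ?M_neq0 // divz_nat divn_small // addr0.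
Qed.

Lemma bell_lower (k : nat) (hk : (k < N)%N) :
  E x (fun a => (if (d%:Z %| (a (inord k) : nat)%:Z - (a ord_max : nat)%:Z)%Z then d%:Z else 0) - 1)
  <= bellI p x.
Proof.
case hodd : (odd k).
- have hsg : sg k = -1 by rewrite /sg -signr_odd hodd.
  have := bell_ge k hk ((x (inord k) : nat)%:Z + 1) 0.
  rewrite hsg.
  pose G (n : nat) := Psi k (fun c : int => -1 * c + 0) ((x (inord k) : nat)%:Z + n%:Z).
  have -> : \sum_(r < M) (Psi k (fun c : int => -1 * c + 0) ((x (inord k) : nat)%:Z + 1 + (r : nat)%:Z) -
              Psi k (fun c : int => -1 * c + 0) ((x (inord k) : nat)%:Z + 1 + (r : nat)%:Z + -1))
          = \sum_(0 <= r < M) (G r.+1 - G r).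
    rewrite big_mkord; apply: eq_bigr => r _; rewrite /G.
    congr (Psi _ _ _ - Psi _ _ _); rewrite -?addn1 ?PoszD; ring.
  rewrite telescope_sumr // /G.
  have e0 : (x (inord k) : nat)%:Z + (0%N)%:Z = (x (inord k) : nat)%:Z + 0 * M%:Z by rewrite mul0r.
  have e1 : (x (inord k) : nat)%:Z + M%:Z = (x (inord k) : nat)%:Z + 1 * M%:Z by rewrite mul1r.
  rewrite e0 e1 !Psi_at // -E_sub.
  move=> h; apply: (le_trans _ h); rewrite le_eqVlt; apply/orP; left; apply/eqP; apply: E_ext => a.
  rewrite /md -signr_odd hodd expr1.
  set w := (a ord_max : nat)%:Z - (a (inord k) : nat)%:Z.
  have -> : -1 * ((a (inord k) : nat)%:Z + 1) - (-1 * (a ord_max : nat)%:Z + 0) = w - 1 by rewrite /w; ring.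
  have -> : -1 * ((a (inord k) : nat)%:Z + 0) - (-1 * (a ord_max : nat)%:Z + 0) = w by rewrite /w; ring.
  rewrite modz_step ?d_posz //.
  have -> : (a (inord k) : nat)%:Z - (a ord_max : nat)%:Z = - w by rewrite /w; ring.
  by rewrite rpredN.
- have hsg : sg k = 1 by rewrite /sg -signr_odd hodd.
  have := bell_ge k hk ((x (inord k) : nat)%:Z) 1.
  rewrite hsg.
  pose F (n : nat) := Psi k (fun c : int => 1 * c + 1) ((x (inord k) : nat)%:Z + n%:Z).
  have -> : \sum_(r < M) (Psi k (fun c : int => 1 * c + 1) ((x (inord k) : nat)%:Z + (r : nat)%:Z) -
              Psi k (fun c : int => 1 * c + 1) ((x (inord k) : nat)%:Z + (r : nat)%:Z + 1))
          = - \sum_(0 <= r < M) (F r.+1 - F r).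
    rewrite big_mkord -sumrN; apply: eq_bigr => r _; rewrite /F opprB.
    by congr (_ - Psi _ _ _); rewrite -?addn1 ?PoszD; ring.
  rewrite telescope_sumr // /F opprB.
  have e0 : (x (inord k) : nat)%:Z + (0%N)%:Z = (x (inord k) : nat)%:Z + 0 * M%:Z by rewrite mul0r.
  have e1 : (x (inord k) : nat)%:Z + M%:Z = (x (inord k) : nat)%:Z + 1 * M%:Z by rewrite mul1r.
  rewrite e0 e1 !Psi_at // -E_sub.
  move=> h; apply: (le_trans _ h); rewrite le_eqVlt; apply/orP; left; apply/eqP; apply: E_ext => a.
  rewrite /md -signr_odd hodd expr0.
  set z := (a (inord k) : nat)%:Z - (a ord_max : nat)%:Z.
  have -> : 1 * ((a (inord k) : nat)%:Z + 0) - (1 * (a ord_max : nat)%:Z + 1) = z - 1 by rewrite /z; ring.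
  have -> : 1 * ((a (inord k) : nat)%:Z + 1) - (1 * (a ord_max : nat)%:Z + 1) = z by rewrite /z; ring.
  by rewrite modz_step ?d_posz.
Qed.


Lemma main_sec (k : 'I_N.+1) : (k < N)%N ->
  (d.-1)%:R <=
    bellI p x
    + bexp p x [:: (k, nat_of_ord (x k), 1); (ord_max, nat_of_ord (x ord_max), -1)]
    + bexp p x [:: (ord_max, nat_of_ord (x ord_max), 1); (k, nat_of_ord (x k), -1)].
Proof.
move=> hk.
have hkm : k != ord_max.
  by apply/negP => /eqP hk'; move: hk; rewrite hk' /= ltnn.
rewrite !bexp_two // 1?eq_sym //.
have := bell_lower k hk; rewrite inord_val => h.
have hc : E x (fun a => ((if (d%:Z %| (a k : nat)%:Z - (a ord_max : nat)%:Z)%Z then d%:Z else 0) - 1)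
        + md (1 * (a k : nat)%:Z + -1 * (a ord_max : nat)%:Z)
        + md (1 * (a ord_max : nat)%:Z + -1 * (a k : nat)%:Z)) = (d.-1)%:R.
  rewrite (E_ext _ _ (fun _ => d%:Z - 1)); last first.
    move=> a; set z := (a k : nat)%:Z - (a ord_max : nat)%:Z.
    have -> : 1 * (a k : nat)%:Z + -1 * (a ord_max : nat)%:Z = z by rewrite /z; ring.
    have -> : 1 * (a ord_max : nat)%:Z + -1 * (a k : nat)%:Z = - z by rewrite /z; ring.
    rewrite -addrA /md modz_pair ?d_posz //; case: ifP => _; ring.
  rewrite E_const.
  have -> : d%:Z - 1 = (d.-1)%:Z by rewrite -subn1 subzn // d_pos.
  by [].
rewrite -hc E_add E_add; apply: lerD; last exact: lexx.
by apply: lerD; last exact: lexx.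
Qed.

End Main.

Theorem theorem2 (R : realFieldType) (N M d : nat)
  (hN : (2 <= N)%N) (hM : (2 <= M)%N) (hd : (2 <= d)%N)
  (p : {ffun 'I_N.+1 -> 'I_M} -> {ffun 'I_N.+1 -> 'I_d} -> R) :
  is_behavior p -> nonsignalling p ->
  forall (x : {ffun 'I_N.+1 -> 'I_M}) (k : 'I_N.+1), (k < N)%N ->
  (d.-1)%:R <=
    bellI p x
    + bexp p x [:: (k, nat_of_ord (x k), 1); (ord_max, nat_of_ord (x ord_max), -1)]
    + bexp p x [:: (ord_max, nat_of_ord (x ord_max), 1); (k, nat_of_ord (x k), -1)].
Proof.
move=> hb hns x k hk.
exact: (main_sec R N M d p hN hM hd hb hns x k hk).
Qed.
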